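(* Let $\mathcal{C}_2=\mathbb{C}\{e_1,e_2\}$ be the complex algebra with basis $1,e_1,e_2,e_{12}=e_1e_2$, where $e_1^2=e_2^2=-1$ and $e_1e_2=-e_2e_1$. Let $A\in\mathcal{C}_2^{m\times n}$ be written as $A=A_0+A_1e_1+A_2e_2+A_3e_{12}$ with $A_0,\dots,A_3\in\mathbb{C}^{m\times n}$. For a positive integer $t$ let $$K_{2t}=\frac12\begin{pmatrix}(1-ie_1)I_t & (e_2+ie_{12})I_t\\ (-e_2+ie_{12})I_t & (1+ie_1)I_t\end{pmatrix}.$$ Then $K_{2t}$ is invertible with $K_{2t}^{-1}=K_{2t}$, and $$K_{2m}\begin{pmatrix}A&0\\0&A\end{pmatrix}K_{2n}^{-1}=\begin{pmatrix}A_0+A_1i & -(A_2+A_3i)\\ A_2-A_3i & A_0-A_1i\end{pmatrix}.$$ In particular, if $m=n$ this is a similarity over $\mathcal{C}_2$.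
   Context: $i$ is the imaginary unit of $\mathbb{C}$, commuting with all elements of $\mathcal{C}_2$; $I_t$ is the $t\times t$ identity matrix. *)

(* Defs.v *)
From HB Require Import structures.
From mathcomp Require Import all_boot all_order all_algebra.
From mathcomp Require Import ring.
From mathcomp Require Import reals.
From mathcomp Require Import complex.

Set Implicit Arguments.
Unset Strict Implicit.
Unset Printing Implicit Defensive.

Import Order.TTheory GRing.Theory Num.Theory.
Local Open Scope ring_scope.

(* The Clifford algebra  F{e1,e2}  over a commutative ring F:
   elements a0 + a1 e1 + a2 e2 + a3 e12 (e12 = e1 e2),
   with e1^2 = e2^2 = -1 and e1 e2 = - e2 e1. *)
Record cliff2 (F : Type) := Cliff2 { c0 : F; c1 : F; c2 : F; c3 : F }.

Section Cliff2Ring.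
Variable F : comNzRingType.

Definition cl_enc (x : cliff2 F) : F * F * F * F := (c0 x, c1 x, c2 x, c3 x).
Definition cl_dec (p : F * F * F * F) : cliff2 F :=
  let: (a, b, c, d) := p in Cliff2 a b c d.
Lemma cl_encK : cancel cl_enc cl_dec. Proof. by case. Qed.

HB.instance Definition _ := Equality.copy (cliff2 F) (can_type cl_encK).
HB.instance Definition _ := Choice.copy (cliff2 F) (can_type cl_encK).

Definition cl_zero : cliff2 F := Cliff2 0 0 0 0.
Definition cl_one : cliff2 F := Cliff2 1 0 0 0.
Definition cl_opp (x : cliff2 F) := Cliff2 (- c0 x) (- c1 x) (- c2 x) (- c3 x).
Definition cl_add (x y : cliff2 F) :=
  Cliff2 (c0 x + c0 y) (c1 x + c1 y) (c2 x + c2 y) (c3 x + c3 y).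
(* product from the rules e1^2 = e2^2 = e12^2 = -1, e1 e2 = e12 = - e2 e1,
   e1 e12 = - e2, e12 e1 = e2, e2 e12 = e1, e12 e2 = - e1 *)
Definition cl_mul (x y : cliff2 F) :=
  let: Cliff2 a0 a1 a2 a3 := x in let: Cliff2 b0 b1 b2 b3 := y in
  Cliff2 (a0 * b0 - a1 * b1 - a2 * b2 - a3 * b3)
         (a0 * b1 + a1 * b0 + a2 * b3 - a3 * b2)
         (a0 * b2 + a2 * b0 - a1 * b3 + a3 * b1)
         (a0 * b3 + a3 * b0 + a1 * b2 - a2 * b1).

Lemma cl_addA : associative cl_add.
Proof. by move=> [? ? ? ?] [? ? ? ?] [? ? ? ?]; rewrite /cl_add /cl_mul /cl_opp /=; congr Cliff2; ring. Qed.
Lemma cl_addC : commutative cl_add.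
Proof. by move=> [? ? ? ?] [? ? ? ?]; rewrite /cl_add /cl_mul /cl_opp /=; congr Cliff2; ring. Qed.
Lemma cl_add0 : left_id cl_zero cl_add.
Proof. by move=> [? ? ? ?]; rewrite /cl_add /cl_mul /cl_opp /=; congr Cliff2; ring. Qed.
Lemma cl_addN : left_inverse cl_zero cl_opp cl_add.
Proof. by move=> [? ? ? ?]; rewrite /cl_add /cl_mul /cl_opp /=; congr Cliff2; ring. Qed.
Lemma cl_mulA : associative cl_mul.
Proof. by move=> [? ? ? ?] [? ? ? ?] [? ? ? ?]; rewrite /cl_add /cl_mul /cl_opp /=; congr Cliff2; ring. Qed.
Lemma cl_mul1 : left_id cl_one cl_mul.
Proof. by move=> [? ? ? ?]; rewrite /cl_add /cl_mul /cl_opp /=; congr Cliff2; ring. Qed.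
Lemma cl_mulr1 : right_id cl_one cl_mul.
Proof. by move=> [? ? ? ?]; rewrite /cl_add /cl_mul /cl_opp /=; congr Cliff2; ring. Qed.
Lemma cl_mulDl : left_distributive cl_mul cl_add.
Proof. by move=> [? ? ? ?] [? ? ? ?] [? ? ? ?]; rewrite /cl_add /cl_mul /cl_opp /=; congr Cliff2; ring. Qed.
Lemma cl_mulDr : right_distributive cl_mul cl_add.
Proof. by move=> [? ? ? ?] [? ? ? ?] [? ? ? ?]; rewrite /cl_add /cl_mul /cl_opp /=; congr Cliff2; ring. Qed.
Lemma cl_one_neq0 : cl_one != cl_zero.
Proof. by apply/eqP => -[] /eqP; rewrite oner_eq0. Qed.

HB.instance Definition _ := GRing.isNzRing.Build (cliff2 F)
  cl_addA cl_addC cl_add0 cl_addN cl_mulA cl_mul1 cl_mulr1 cl_mulDl cl_mulDr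
  cl_one_neq0.

Definition cl_sc (a : F) : cliff2 F := Cliff2 a 0 0 0.
Definition e1 : cliff2 F := Cliff2 0 1 0 0.
Definition e2 : cliff2 F := Cliff2 0 0 1 0.
Definition e12 : cliff2 F := e1 * e2.

End Cliff2Ring.

Arguments e1 {F}.
Arguments e2 {F}.
Arguments e12 {F}.

Notation C2 R := (cliff2 (R : realType)[i]).

Definition cmp0 (R : realType) m n (A : 'M[C2 R]_(m, n)) := map_mx (@c0 _) A.
Definition cmp1 (R : realType) m n (A : 'M[C2 R]_(m, n)) := map_mx (@c1 _) A.
Definition cmp2 (R : realType) m n (A : 'M[C2 R]_(m, n)) := map_mx (@c2 _) A.
Definition cmp3 (R : realType) m n (A : 'M[C2 R]_(m, n)) := map_mx (@c3 _) A.

Definition to_C2 (R : realType) m n (M : 'M[R[i]]_(m, n)) : 'M[C2 R]_(m, n) :=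
  map_mx (@cl_sc _) M.

Definition Kmx (R : realType) (t : nat) : 'M[C2 R]_(t + t) :=
  let ii : C2 R := cl_sc 'i%C in
  let h : C2 R := cl_sc (2%:R^-1) in
  block_mx ((h * (1 - ii * e1))%:M) ((h * (e2 + ii * e12))%:M)
           ((h * (- e2 + ii * e12))%:M) ((h * (1 + ii * e1))%:M).

(* Main.v *)
Require Import Defs.
From HB Require Import structures.
From mathcomp Require Import all_boot all_order all_algebra.
From mathcomp Require Import reals complex ring.
Import GRing.Theory Num.Theory.
Local Open Scope ring_scope.

Section S.
Variable F : fieldType.
Lemma mulE (a0 a1 a2 a3 b0 b1 b2 b3 : F) :
  Cliff2 a0 a1 a2 a3 * Cliff2 b0 b1 b2 b3 =
  Cliff2 (a0 * b0 - a1 * b1 - a2 * b2 - a3 * b3)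
         (a0 * b1 + a1 * b0 + a2 * b3 - a3 * b2)
         (a0 * b2 + a2 * b0 - a1 * b3 + a3 * b1)
         (a0 * b3 + a3 * b0 + a1 * b2 - a2 * b1).
Proof. by []. Qed.
Lemma addE (a0 a1 a2 a3 b0 b1 b2 b3 : F) :
  Cliff2 a0 a1 a2 a3 + Cliff2 b0 b1 b2 b3 =
  Cliff2 (a0 + b0) (a1 + b1) (a2 + b2) (a3 + b3).
Proof. by []. Qed.
Lemma oppE (a0 a1 a2 a3 : F) : - Cliff2 a0 a1 a2 a3 = Cliff2 (- a0) (- a1) (- a2) (- a3).
Proof. by []. Qed.
Lemma cl_eq (a0 a1 a2 a3 b0 b1 b2 b3 : F) : a0 = b0 -> a1 = b1 -> a2 = b2 -> a3 = b3 ->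
  Cliff2 a0 a1 a2 a3 = Cliff2 b0 b1 b2 b3.
Proof. by move=> -> -> -> ->. Qed.
Lemma oneE : (1 : cliff2 F) = Cliff2 1 0 0 0. Proof. by []. Qed.
Lemma zeroE : (0 : cliff2 F) = Cliff2 0 0 0 0. Proof. by []. Qed.
Lemma e1E : (e1 : cliff2 F) = Cliff2 0 1 0 0. Proof. by []. Qed.
Lemma e2E : (e2 : cliff2 F) = Cliff2 0 0 1 0. Proof. by []. Qed.
Lemma scE a : (cl_sc a : cliff2 F) = Cliff2 a 0 0 0. Proof. by []. Qed.

Ltac clsimp := rewrite /e12 ?oneE ?zeroE ?e1E ?e2E ?scE;
  repeat (rewrite oppE || rewrite mulE || rewrite addE); cbn [c0 c1 c2 c3].

Variables i : F.
Hypothesis Hi : i * i = -1.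
Hypothesis H2 : (2:F) != 0.
Let h : F := 2^-1.
Definition k11 : cliff2 F := cl_sc h * (1 - cl_sc i * e1).
Definition k12 : cliff2 F := cl_sc h * (e2 + cl_sc i * e12).
Definition k21 : cliff2 F := cl_sc h * (- e2 + cl_sc i * e12).
Definition k22 : cliff2 F := cl_sc h * (1 + cl_sc i * e1).
Lemma k11E : k11 = Cliff2 h (- (h * i)) 0 0. Proof. rewrite /k11; clsimp. apply: cl_eq. all: ring. Qed.
Lemma k12E : k12 = Cliff2 0 0 h (h * i). Proof. rewrite /k12; clsimp; apply: cl_eq; ring. Qed.
Lemma k21E : k21 = Cliff2 0 0 (- h) (h * i). Proof. rewrite /k21; clsimp; apply: cl_eq; ring. Qed.
Lemma k22E : k22 = Cliff2 h (h * i) 0 0. Proof. rewrite /k22; clsimp; apply: cl_eq; ring. Qed.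

Ltac csolve a := case: a => a0 a1 a2 a3; rewrite ?k11E ?k12E ?k21E ?k22E; clsimp; rewrite /h; apply: cl_eq; field: Hi; try exact: H2.

Lemma e11 (a : cliff2 F) : k11 * a * k11 + k12 * a * k21 = cl_sc (c0 a + i * c1 a).
Proof. csolve a. Qed.
Lemma e12' (a : cliff2 F) : k11 * a * k12 + k12 * a * k22 = - cl_sc (c2 a + i * c3 a).
Proof. csolve a. Qed.
Lemma e21 (a : cliff2 F) : k21 * a * k11 + k22 * a * k21 = cl_sc (c2 a - i * c3 a).
Proof. csolve a. Qed.
Lemma e22 (a : cliff2 F) : k21 * a * k12 + k22 * a * k22 = cl_sc (c0 a - i * c1 a).
Proof. csolve a. Qed.
Lemma kk11 : k11 * k11 + k12 * k21 = 1.
Proof. rewrite k11E k12E k21E; clsimp; rewrite /h; apply: cl_eq; field: Hi; try exact: H2. Qed.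
Lemma kk12 : k11 * k12 + k12 * k22 = 0.
Proof. rewrite k11E k12E k22E; clsimp; rewrite /h; apply: cl_eq; field: Hi; try exact: H2. Qed.
Lemma kk21 : k21 * k11 + k22 * k21 = 0.
Proof. rewrite k11E k21E k22E; clsimp; rewrite /h; apply: cl_eq; field: Hi; try exact: H2. Qed.
Lemma kk22 : k21 * k12 + k22 * k22 = 1.
Proof. rewrite k12E k21E k22E; clsimp; rewrite /h; apply: cl_eq; field: Hi; try exact: H2. Qed.
End S.
Arguments k11 {F}.
Arguments k12 {F}.
Arguments k21 {F}.
Arguments k22 {F}.

Lemma sAs (T : pzRingType) m n (x y : T) (A : 'M[T]_(m, n)) :
  x%:M *m A *m y%:M = map_mx (fun a => x * a * y) A.
Proof.
apply/matrixP => i j; rewrite mul_scalar_mx !mxE (bigD1 j) //= big1 => [|k /negbTE nkj].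
  by rewrite !mxE eqxx mulr1n addr0.
by rewrite !mxE nkj mulr0n mulr0.
Qed.

Lemma scD (T : pzRingType) t (a b : T) : (a + b)%:M = a%:M + b%:M :> 'M_t.
Proof. by apply/matrixP=> i j; rewrite !mxE mulrnDl. Qed.

Lemma blk_inv (T : pzRingType) t (a b c d : T) :
  a * a + b * c = 1 -> a * b + b * d = 0 -> c * a + d * c = 0 -> c * b + d * d = 1 ->
  block_mx a%:M b%:M c%:M d%:M *m block_mx a%:M b%:M c%:M d%:M = 1%:M :> 'M_(t + t).
Proof.
move=> h1 h2 h3 h4.
rewrite mulmx_block -!scalar_mxM -!scD h1 h2 h3 h4 [RHS]scalar_mx_block.
by congr block_mx; apply/matrixP => i j; rewrite !mxE mul0rn.
Qed.

Lemma blk_conj (T : pzRingType) m n (a b c d : T) (A : 'M[T]_(m, n)) :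
  block_mx a%:M b%:M c%:M d%:M *m block_mx A 0 0 A *m block_mx a%:M b%:M c%:M d%:M =
  block_mx (map_mx (fun x => a * x * a + b * x * c) A)
           (map_mx (fun x => a * x * b + b * x * d) A)
           (map_mx (fun x => c * x * a + d * x * c) A)
           (map_mx (fun x => c * x * b + d * x * d) A).
Proof.
rewrite !mulmx_block ?mulmx0 ?mul0mx ?addr0 ?add0r !sAs.
by congr block_mx; apply/matrixP => i j; rewrite !mxE.
Qed.

Theorem theorem10 (R : realType) (m n : nat) (A : 'M[C2 R]_(m, n)) :
  (0 < m)%N -> (0 < n)%N ->
  (forall t : nat, (0 < t)%N -> Kmx R t *m Kmx R t = 1%:M) /\
  Kmx R m *m block_mx A 0 0 A *m Kmx R n =
  block_mx (to_C2 (cmp0 A + 'i%C *: cmp1 A))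
           (- to_C2 (cmp2 A + 'i%C *: cmp3 A))
           (to_C2 (cmp2 A - 'i%C *: cmp3 A))
           (to_C2 (cmp0 A - 'i%C *: cmp1 A)).
Proof.
move=> _ _.
have Hi : ('i%C : R[i]) * 'i%C = -1 by rewrite -expr2; exact: sqr_i.
have H2 : (2 : R[i]) != 0 by rewrite pnatr_eq0.
have KE : forall t, Kmx R t = block_mx (k11 'i%C)%:M (k12 'i%C)%:M (k21 'i%C)%:M (k22 'i%C)%:M.
  by [].
split.
  move=> t _; rewrite KE; apply: blk_inv.
  - exact: kk11.
  - exact: kk12.
  - exact: kk21.
  - exact: kk22.
rewrite !KE blk_conj.
congr block_mx; apply/matrixP => i j; rewrite !mxE.
- exact: e11.
- exact: e12'.
- exact: e21.
- exact: e22.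
Qed.
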